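(* For any history $\mathcal{F}_{t-1}$, conditioned on the event $E^{\widetilde f}(t)$, for all $\mathbf{x}\in\mathcal{X}$, \[ \mathbb{P}\big(\widetilde f_t(\mathbf{x})+\epsilon_{m,t}>f(\mathbf{x})\mid\mathcal{F}_{t-1}\big)\ge p,\qquad p=\frac{1}{4e\sqrt\pi}. \]
   Context: $\mathcal{X}$ finite subset of the unit ball of $\mathbb{R}^d$; $f\sim\mathcal{GP}(0,k)$, $k$ the exact NTK with $k\le K_0$, $|f|\le B'$; noise $\mathcal{N}(0,\sigma^2)$; $\delta\in(0,1)$, horizon $T$. $\widetilde k$ is the empirical NTK (gradient inner product of a network with $L+1$ layers at initialization), with $|\widetilde k-k|\le(L+1)\varepsilon$ on $\mathcal{X}\times\mathcal{X}$, $(L+1)\varepsilon\le1$, $\sigma^2\le1$, $\hat K_0=\max\{1,K_0\}$. $\beta_t=2\log(2\pi^2t^2|\mathcal{X}|/(3\delta))$. Queries indexed sequentially; $\mathrm{fb}[t]$ is the largest index observed when $\mathbf{x}_t$ is chosen ($t-\mathrm{fb}[t]\le B$); $\mathcal{F}_{t-1}$ is the history of observed inputs/outputs and pending inputs. $\widetilde\mu_{\mathrm{fb}[t]},\widetilde\sigma^2_{\mathrm{fb}[t]}$: GP posterior mean/covariance with kernel $\widetilde k$ given observations $1,\dots,\mathrm{fb}[t]$; given $\mathcal{F}_{t-1}$, $\widetilde f_t\sim\mathcal{GP}(\widetilde\mu_{\mathrm{fb}[t]},\beta_t^2\widetilde\sigma^2_{\mathrm{fb}[t]})$. $\epsilon_{m,t}=2\hat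 K_0\frac{t^2(L+1)\varepsilon}{\sigma^4}(B'+\sigma\sqrt{2\log(4T/\delta)})+\beta_t\sqrt{(L+1)\varepsilon(1+4\hat K_0^2t^2/\sigma^4)}$. $E^{\widetilde f}(t)$ is the event $|\widetilde\mu_{\mathrm{fb}[t]}(\mathbf{x})-f(\mathbf{x})|\le\beta_t\widetilde\sigma_{\mathrm{fb}[t]}(\mathbf{x})+\epsilon_{m,t}$ for all $\mathbf{x}$. *)

(* Defs.v *)
From HB Require Import structures.
From mathcomp Require Import all_boot all_order all_algebra.
From mathcomp Require Import all_classical all_reals all_analysis.
Set Implicit Arguments. Unset Strict Implicit. Unset Printing Implicit Defensive.
Import Order.TTheory GRing.Theory Num.Theory.
Local Open Scope ring_scope.

Section Defs.
Variable R : realType.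

(* Empirical NTK: gradient inner product <g x, g y> of feature vectors
   g x : 'rV_p (gradient of the network at initialization). *)
Definition gram_kernel (X : finType) (p : nat) (g : X -> 'rV[R]_p) (x y : X) : R :=
  (g x *m (g y)^T) 0 0.

Definition gram_mx (X : finType) (n : nat) (k : X -> X -> R) (xo : 'I_n -> X) : 'M[R]_n :=
  \matrix_(i, j) k (xo i) (xo j).

Definition kvec (X : finType) (n : nat) (k : X -> X -> R) (xo : 'I_n -> X) (x : X) : 'cV[R]_n :=
  \col_i k (xo i) x.

Definition post_mean (X : finType) (n : nat) (k : X -> X -> R) (s2 : R)
  (xo : 'I_n -> X) (yo : 'cV[R]_n) (x : X) : R :=
  ((kvec k xo x)^T *m invmx (gram_mx k xo + s2%:M) *m yo) 0 0.

Definition post_var (X : finType) (n : nat) (k : X -> X -> R) (s2 : R)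
  (xo : 'I_n -> X) (x : X) : R :=
  k x x - ((kvec k xo x)^T *m invmx (gram_mx k xo + s2%:M) *m kvec k xo x) 0 0.

Definition beta_t (t card : nat) (delta : R) : R :=
  2 * ln (2 * pi ^+ 2 * (t%:R) ^+ 2 * card%:R / (3 * delta)).

Definition eps_mt (t T card L : nat) (delta eps sigma K0hat B' : R) : R :=
  2 * K0hat * ((t%:R) ^+ 2 * (L.+1%:R * eps)) / sigma ^+ 4
     * (B' + sigma * Num.sqrt (2 * ln (4 * T%:R / delta)))
  + beta_t t card delta
     * Num.sqrt ((L.+1%:R * eps) * (1 + 4 * K0hat ^+ 2 * (t%:R) ^+ 2 / sigma ^+ 4)).

End Defs.

(* Main.v *)
Require Import Defs.
From HB Require Import structures.
From mathcomp Require Import all_boot all_order all_algebra.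
From mathcomp Require Import all_classical all_reals all_analysis.
Import Order.TTheory GRing.Theory Num.Theory.
Local Open Scope ring_scope.
From mathcomp Require Import ring lra measurable_realfun.
Lemma itv_oc_mem (R : realType) (a b z : R) :
  (`]a, b]%classic : set R) z -> a < z /\ z <= b.
Proof. by rewrite /= in_itv /= => /andP. Qed.

Lemma itv_oy_mem (R : realType) (c z : R) :
  (`]c, +oo[%classic : set R) z <-> c < z.
Proof. by rewrite /= in_itv /= andbT. Qed.

Local Open Scope classical_set_scope.
Theorem lemma14 (R : realType) (d : nat) (X : finType) (pt : X -> 'rV[R]_d)
  (pt_inj : injective pt)
  (pt_ball : forall x : X, \sum_(i < d) (pt x 0 i) ^+ 2 <= 1)
  (k : X -> X -> R) (K0 : R) (k_le : forall x y : X, k x y <= K0)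
  (f : X -> R) (B' : R) (f_le : forall x : X, `|f x| <= B')
  (sigma : R) (sigma_gt0 : 0 < sigma) (sigma_le : sigma ^+ 2 <= 1)
  (delta : R) (delta_gt0 : 0 < delta) (delta_lt1 : delta < 1)
  (T : nat)
  (L p : nat) (g : X -> 'rV[R]_p) (eps : R) (eps_ge0 : 0 <= eps)
  (kt_approx : forall x y : X, `|gram_kernel g x y - k x y| <= L.+1%:R * eps)
  (eps_le : L.+1%:R * eps <= 1)
  (Bd : nat)
  (xq : nat -> X) (yq : nat -> R) (fb : nat -> nat)
  (fb_lt : forall s : nat, (0 < s)%N -> (fb s < s)%N)
  (fb_delay : forall s : nat, (s - fb s <= Bd)%N)
  (t : nat) (t_ge1 : (1 <= t)%N) (t_le : (t <= T)%N) :
  let K0hat := Num.max 1 K0 in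
  let n := fb t in
  let xo : 'I_n -> X := fun i => xq i.+1 in
  let yo : 'cV[R]_n := \col_i yq i.+1 in
  let mu := post_mean (gram_kernel g) (sigma ^+ 2) xo yo in
  let sd := fun x => Num.sqrt (post_var (gram_kernel g) (sigma ^+ 2) xo x) in
  let beta := beta_t t #|X| delta in
  let em := eps_mt t T #|X| L delta eps sigma K0hat B' in
  (* the event E^{f~}(t) *)
  (forall x : X, `|mu x - f x| <= beta * sd x + em) ->
  forall x : X, 0 < sd x ->
    ((1 / (4 * expR 1 * Num.sqrt pi))%:E
       <= normal_prob (mu x) (beta * sd x) [set z : R | (f x < z + em)%R])%E.
Proof.
move=> K0hat n xo yo mu sd beta em Hev x sdpos.
have beta_gt0 : 0 < beta.
  rewrite /beta /beta_t; apply: mulr_gt0 => //; apply: ln_gt0.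
  have pi2 := pi_ge2 R.
  have ht : 1 <= (t%:R : R) by rewrite ler1n.
  have hX : 1 <= (#|X|%:R : R) by rewrite ler1n; apply/card_gt0P; exists x.
  rewrite ltr_pdivlMr; last by rewrite mulr_gt0.
  rewrite mul1r.
  have h1 : 4 <= pi ^+ 2 :> R.
    by rewrite (_ : 4 = 2 ^+ 2) ?lerXn2r ?nnegrE ?pi_ge0 //; lra.
  have h2 : 1 <= t%:R ^+ 2 :> R by rewrite expr_ge1.
  have h3 : 8 <= 2 * pi ^+ 2 * t%:R ^+ 2 :> R.
    by nra.
  nra.
have s_gt0 : 0 < beta * sd x by apply: mulr_gt0.
set s := beta * sd x in s_gt0 *.
have s0 : s != 0 by rewrite gt_eqF.
set m := mu x.
set a := m + s. set b := m + s * Num.sqrt 2.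
have hfa : f x - em <= a.
  have := Hev x; rewrite -/m -/s => /ler_normlP [H1 H2]; rewrite /a; lra.
have sub : `]a, b] `<=` [set z : R | (f x < z + em)%R].
  by move=> z /itv_oc_mem [az _]; rewrite /mkset; lra.
have Aeq : [set z : R | (f x < z + em)%R] = `]f x - em, +oo[.
  apply/seteqP; split => z.
  by rewrite /mkset => h; apply/itv_oy_mem; lra.
  by move/itv_oy_mem; rewrite /mkset; lra.
apply: (@le_trans _ _ (\int[lebesgue_measure]_(z in `]a, b]) (normal_pdf m s z)%:E)%E); last first.
  rewrite /normal_prob Aeq; apply: ge0_subset_integral => //.
  - apply/measurable_EFinP; apply: measurable_funS (measurable_normal_pdf m s) => //.
  - by move=> z _; rewrite lee_fin normal_pdf_ge0.
  - by rewrite -Aeq.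
have hv2 : Num.sqrt 2 ^+ 2 = 2 :> R by rewrite sqr_sqrtr.
have hv0 : 0 < Num.sqrt 2 :> R by rewrite sqrtr_gt0.
have hv1 : 1 < Num.sqrt 2 :> R by nra.
have hab : a < b by rewrite /a /b; nra.
have peak0 := normal_peak_gt0 s0.
set c := normal_peak s * expR (-1).
have c0 : 0 <= c by rewrite mulr_ge0 // ?expR_ge0 ?ltW.
apply: (@le_trans _ _ (\int[lebesgue_measure]_(z in `]a, b]) (cst c%:E z))%E).
  rewrite integral_cst //= lebesgue_measure_itv /= lte_fin hab -EFinD -EFinM lee_fin.
  rewrite /c /b /a /normal_peak expRN.
  have hpi : 0 < Num.sqrt pi :> R by rewrite sqrtr_gt0 pi_gt0.
  have he : 0 < expR 1 :> R by rewrite expR_gt0.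
  rewrite (_ : s ^+ 2 * pi *+ 2 = s ^+ 2 * (pi * 2)); last by rewrite mulr_natr; ring.
  rewrite sqrtrM ?sqr_ge0 //.
  rewrite (sqrtr_sqr s) gtr0_norm // sqrtrM ?pi_ge0 //.
  set u := Num.sqrt pi; set v := Num.sqrt 2; set e := expR 1.
  rewrite -subr_ge0.
  have -> : (s * (u * v))^-1 * e^-1 * (m + s * v - (m + s)) - 1 / (4 * e * u)
     = (3 * v - 4) / (4 * u * v * e).
    field.
  by rewrite s0 !gt_eqF.
  have hvv : v * v = 2 by rewrite -expr2.
  have h34 : 0 <= 3 * v - 4.
    rewrite subr_ge0 -(@ler_pXn2r _ 2) ?nnegrE ?mulr_ge0 ?ltW //.
    by rewrite exprMn hv2; lra.
  have hd : 0 <= 4 * u * v * e by rewrite !mulr_ge0 // ?ltW.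
  by rewrite mulr_ge0 // invr_ge0.
apply: ge0_le_integral => //.
- apply/measurable_EFinP; apply: measurable_funS (measurable_normal_pdf m s) => //.
- move=> z /itv_oc_mem [az zb]; rewrite lee_fin /normal_pdf (negbTE s0) /c.
  apply: ler_wpM2l; first exact: ltW.
  rewrite /normal_fun ler_expR mulNr lerN2 ler_pdivrMr; last by rewrite pmulrn_rgt0 // exprn_gt0.
  rewrite mul1r mulr2n.
  have h1 : 0 <= z - m by rewrite /a in az; lra.
  have h2 : z - m <= s * Num.sqrt 2 by rewrite /b in zb; lra.
  have h3 : (z - m) ^+ 2 <= (s * Num.sqrt 2) ^+ 2 by rewrite ler_pXn2r // ?nnegrE; nra.
  by rewrite exprMn hv2 in h3; lra.
Qed.
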